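(* Let $(X,\|\cdot\|,\tau)$ be a complete, C-sequential Saks space with mixed topology $\gamma$, and let $(A,D(A))$ be the generator of a $\tau$-bi-continuous semigroup $(T(t))_{t\ge0}$ on $X$. Then the following are equivalent: (a) $(T(t))_{t\ge0}$ is $\gamma$-equicontinuous. (b) There is a directed system $\Gamma_\gamma$ of continuous seminorms generating $\gamma$ such that $(A,D(A))$ is $\Gamma_\gamma$-dissipative.
   Context: $(X,\|\cdot\|)$ is a Banach space and $\tau$ a Hausdorff locally convex topology on $X$ coarser than the norm topology. The mixed topology $\gamma=\gamma(\|\cdot\|,\tau)$ is the finest linear topology on $X$ coinciding with $\tau$ on $\|\cdot\|$-bounded sets with $\tau\subseteq\gamma\subseteq\tau_{\|\cdot\|}$ (Hausdorff locally convex). $(X,\|\cdot\|,\tau)$ is a Saks space if $\tau$ is generated by a directed system $\Gamma_\tau$ of continuous seminorms with $\|x\|=\sup_{p\in\Gamma_\tau}p(x)$ for all $x$; it is complete if $(X,\gamma)$ is complete, and C-sequential if every convex sequentially open subset of $(X,\gamma)$ is open. A $\tau$-bi-continuous semigroup is a family $(T(t))_{t\ge0}$ of bounded operators with $T(0)=\mathrm{id}$, $T(t+s)=T(t)T(s)$, $t\mapsto T(t)x$ $\tau$-continuous for each $x$, $\|T(t)\|\le Me^{\omega t}$ for some $M\ge1$, $\omega\in\mathbb{R}$, and such that for every $\|\cdot\|$-bounded sequence $x_n\to x$ in $\tau$ one has $T(t)(x_n-x)\to0$ in $\tau$ locally uniformly in $t\ge0$. Its generator: $D(A)=\{x:\tau\text{-}\lim_{t\to0+}\frac{T(t)x-x}{t}\text{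 exists and }\sup_{t\in(0,1]}\frac{\|T(t)x-x\|}{t}<\infty\}$, $Ax$ this limit. $(T(t))$ is $\gamma$-equicontinuous if, for a directed system $\Gamma$ of continuous seminorms generating $\gamma$, for every $p\in\Gamma$ there are $\tilde p\in\Gamma$, $C\ge0$ with $p(T(t)x)\le C\tilde p(x)$ for all $t\ge0$, $x\in X$. $A$ is $\Gamma_\gamma$-dissipative if $p((\lambda-A)x)\ge\lambda p(x)$ for all $\lambda>0$, $x\in D(A)$, $p\in\Gamma_\gamma$. *)

(* Defs.v *)
From HB Require Import structures.
From mathcomp Require Import all_boot all_order all_algebra.
From mathcomp Require Import all_classical all_reals all_analysis.
Set Implicit Arguments. Unset Strict Implicit. Unset Printing Implicit Defensive.
Import Order.TTheory GRing.Theory Num.Theory.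
Import numFieldNormedType.Exports.
Local Open Scope classical_set_scope.
Local Open Scope ring_scope.

Section SaksDefs.
Context {R : realType} {X : normedModType R}.

Definition seminorm (p : X -> R) : Prop :=
  (forall x y, p (x + y) <= p x + p y) /\ (forall (a : R) x, p (a *: x) = `|a| * p x).

Definition directed_sys (G : set (X -> R)) : Prop :=
  forall p1 p2, G p1 -> G p2 ->
    exists p, G p /\ exists C : R, 0 <= C /\
      forall x, Num.max (p1 x) (p2 x) <= C * p x.

Definition gen_open (G : set (X -> R)) (U : set X) : Prop :=
  forall x, U x -> exists (n : nat) (ps : 'I_n -> X -> R),
    (forall i, G (ps i)) /\ exists eps : R, 0 < eps /\
      forall y, (forall i, ps i (y - x) < eps) -> U y.

Definition generates (G : set (X -> R)) (O : set (set X)) : Prop :=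
  (forall p, G p -> seminorm p) /\ directed_sys G /\
  (forall U, O U <-> gen_open G U).

(* (X, |.|, tau) Saks space, tau generated by the directed system Gt and
   |x| = sup_{p in Gt} p x *)
Definition saks_space (Gt : set (X -> R)) : Prop :=
  (forall p, Gt p -> seminorm p) /\ directed_sys Gt /\
  (forall p x, Gt p -> p x <= `|x|) /\
  (forall x (eps : R), 0 < eps -> exists p, Gt p /\ `|x| - eps < p x).

Definition is_topology (O : set (set X)) : Prop :=
  O setT /\
  (forall F : set (set X), (forall U, F U -> O U) ->
     O [set x | exists U, F U /\ U x]) /\
  (forall U V, O U -> O V -> O (U `&` V)).

Definition linear_top (O : set (set X)) : Prop :=
  is_topology O /\
  (forall x y U, O U -> U (x + y) ->
     exists V W, O V /\ O W /\ V x /\ W y /\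
       forall v w, V v -> W w -> U (v + w)) /\
  (forall (a : R) x U, O U -> U (a *: x) ->
     exists (d : R) V, 0 < d /\ O V /\ V x /\
       forall (b : R) v, `|b - a| < d -> V v -> U (b *: v)).

Definition agrees_on_bounded (O : set (set X)) (Gt : set (X -> R)) : Prop :=
  forall B : set X, (exists r : R, forall x, B x -> `|x| <= r) ->
    forall U : set X,
      (exists V, O V /\ U = V `&` B) <-> (exists V, gen_open Gt V /\ U = V `&` B).

(* open sets of the mixed topology gamma(|.|, tau): the finest linear topology
   coinciding with tau on bounded sets; its open sets are exactly the sets that
   are open for some linear topology coinciding with tau on bounded sets *)
Definition mixed_open (Gt : set (X -> R)) (U : set X) : Prop :=
  exists O, linear_top O /\ agrees_on_bounded O Gt /\ O U.

Definition complete_top (O : set (set X)) : Prop :=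
  forall (I : Type) (le : I -> I -> Prop) (i0 : I),
    (forall i, le i i) -> (forall i j k, le i j -> le j k -> le i k) ->
    (forall i j, exists k, le i k /\ le j k) ->
    forall u : I -> X,
      (forall U, O U -> U 0 -> exists i1, forall i j, le i1 i -> le i1 j -> U (u i - u j)) ->
      exists x, forall U, O U -> U x -> exists i1, forall i, le i1 i -> U (u i).

Definition complete_saks (Gt : set (X -> R)) : Prop := complete_top (mixed_open Gt).

Definition seq_conv (O : set (set X)) (u : nat -> X) (x : X) : Prop :=
  forall U, O U -> U x -> exists N, forall n, (N <= n)%N -> U (u n).

Definition seq_open (O : set (set X)) (U : set X) : Prop :=
  forall u x, seq_conv O u x -> U x -> exists N, forall n, (N <= n)%N -> U (u n).

Definition convex_set (U : set X) : Prop :=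
  forall x y (t : R), U x -> U y -> 0 <= t <= 1 -> U (t *: x + (1 - t) *: y).

Definition C_sequential (Gt : set (X -> R)) : Prop :=
  forall U, convex_set U -> seq_open (mixed_open Gt) U -> mixed_open Gt U.

(* tau-bi-continuous semigroup (only t >= 0 matters) *)
Definition bicont_semigroup (Gt : set (X -> R)) (T : R -> {linear X -> X}) : Prop :=
  (forall x, T 0 x = x) /\
  (forall t s x, 0 <= t -> 0 <= s -> T (t + s) x = T t (T s x)) /\
  (forall x t0, 0 <= t0 -> forall U, gen_open Gt U -> U (T t0 x) ->
     exists d : R, 0 < d /\ forall t, 0 <= t -> `|t - t0| < d -> U (T t x)) /\
  (exists M w : R, 1 <= M /\
     forall t x, 0 <= t -> `|T t x| <= M * expR (w * t) * `|x|) /\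
  (forall (u : nat -> X) x, (exists r : R, forall n, `|u n| <= r) ->
     seq_conv (gen_open Gt) u x ->
     forall t0, 0 <= t0 -> forall U, gen_open Gt U -> U 0 ->
       exists N, forall n, (N <= n)%N -> forall t, 0 <= t <= t0 -> U (T t (u n - x))).

Definition gen_rel (Gt : set (X -> R)) (T : R -> {linear X -> X}) (x y : X) : Prop :=
  (forall U, gen_open Gt U -> U y ->
     exists d : R, 0 < d /\ forall t, 0 < t < d -> U (t^-1 *: (T t x - x))) /\
  (exists c : R, forall t, 0 < t <= 1 -> `|T t x - x| / t <= c).

Definition is_generator (Gt : set (X -> R)) (T : R -> {linear X -> X})
    (D : set X) (A : X -> X) : Prop :=
  (forall x, D x <-> exists y, gen_rel Gt T x y) /\
  (forall x, D x -> gen_rel Gt T x (A x)).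

Definition equicont_wrt (G : set (X -> R)) (T : R -> {linear X -> X}) : Prop :=
  forall p, G p -> exists q, G q /\ exists C : R, 0 <= C /\
    forall t x, 0 <= t -> p (T t x) <= C * q x.

Definition gamma_equicontinuous (Gt : set (X -> R)) (T : R -> {linear X -> X}) : Prop :=
  exists G, generates G (mixed_open Gt) /\ equicont_wrt G T.

Definition dissipative (G : set (X -> R)) (D : set X) (A : X -> X) : Prop :=
  forall p, G p -> forall (lam : R) x, 0 < lam -> D x ->
    lam * p x <= p (lam *: x - A x).

End SaksDefs.

(* Main.v *)
Require Import Defs.
From HB Require Import structures.
From mathcomp Require Import all_boot all_order all_algebra.
From mathcomp Require Import all_classical all_reals all_analysis.
From mathcomp Require Import ring lra.
Import Order.TTheory GRing.Theory Num.Theory.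
Local Open Scope classical_set_scope.
Local Open Scope ring_scope.
Set Implicit Arguments. Unset Strict Implicit. Unset Printing Implicit Defensive.


Section Basics.
Context {R : realType} {X : normedModType R}.

Lemma sn0 (p : X -> R) : seminorm p -> p 0 = 0.
Proof. by case=> _ hZ; rewrite -(scale0r (0:X)) hZ normr0 mul0r. Qed.

Lemma snN (p : X -> R) x : seminorm p -> p (- x) = p x.
Proof. by case=> _ hZ; rewrite -scaleN1r hZ normrN normr1 mul1r. Qed.

Lemma sn_ge0 (p : X -> R) x : seminorm p -> 0 <= p x.
Proof.
move=> hp; have := hp.1 x (-x); rewrite subrr sn0 // snN //.
move=> h; lra.
Qed.

Lemma snD (p : X -> R) x y : seminorm p -> p (x + y) <= p x + p y.
Proof. by case=> h _; apply h. Qed.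

Lemma snZ (p : X -> R) a x : seminorm p -> p (a *: x) = `|a| * p x.
Proof. by case=> _ h; apply h. Qed.

Lemma snB (p : X -> R) x y z : seminorm p -> p (x - y) <= p (x - z) + p (z - y).
Proof. by move=> hp; have := snD (x - z) (z - y) hp; rewrite addrA subrK. Qed.

Lemma snBC (p : X -> R) x y : seminorm p -> p (x - y) = p (y - x).
Proof. by move=> hp; rewrite -snN // opprB. Qed.

Lemma sn_lip (p : X -> R) x y : seminorm p -> p x <= p y + p (x - y).
Proof. by move=> hp; have := snD (x - y) y hp; rewrite subrK addrC. Qed.

Lemma sn_sum (p : X -> R) n (f : 'I_n -> X) : seminorm p ->
  p (\sum_(i < n) f i) <= \sum_(i < n) p (f i).
Proof.
move=> hp; apply: (big_ind2 (fun a b => p a <= b)).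
- by rewrite sn0.
- move=> a b c d h1 h2; apply: le_trans (snD _ _ hp) _; exact: lerD.
- by [].
Qed.

Lemma sn_sum_nat (p : X -> R) m n (f : nat -> X) : seminorm p ->
  p (\sum_(m <= i < n) f i) <= \sum_(m <= i < n) p (f i).
Proof.
move=> hp; apply: (big_ind2 (fun a b => p a <= b)).
- by rewrite sn0.
- move=> a b c d h1 h2; apply: le_trans (snD _ _ hp) _; exact: lerD.
- by [].
Qed.

Lemma fin_pos_min n (f : 'I_n -> R) : (forall i, 0 < f i) ->
  exists e, 0 < e /\ forall i, e <= f i.
Proof.
move=> hf; exists (1 + \sum_(i < n) (f i)^-1)^-1.
have hs : 0 <= \sum_(i < n) (f i)^-1 by apply: sumr_ge0 => i _; rewrite invr_ge0 ltW.
have hpos : 0 < 1 + \sum_(i < n) (f i)^-1 by rewrite ltr_wpDr.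
split; first by rewrite invr_gt0.
move=> i; rewrite -[f i]invrK lef_pV2 ?posrE ?invr_gt0 //.
rewrite (bigD1 i) //= addrCA ler_wpDr //.
rewrite ler_wpDl // sumr_ge0 // => j _; rewrite invr_ge0 ltW //.
Qed.

Lemma fin_max_nat n (P : 'I_n -> nat -> Prop) :
  (forall i, exists N, forall m, (N <= m)%N -> P i m) ->
  exists N, forall m, (N <= m)%N -> forall i, P i m.
Proof.
move=> h; have [f hf] := choice h.
exists (\max_(i < n) f i)%N => m hm i; apply: hf.
exact: leq_trans (leq_bigmax i) hm.
Qed.

Lemma fin_min_pos n (P : 'I_n -> R -> Prop) :
  (forall i, exists d, 0 < d /\ forall h, 0 < h < d -> P i h) ->
  exists d, 0 < d /\ forall h, 0 < h < d -> forall i, P i h.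
Proof.
move=> h; have [f hf] := choice h.
have [e [e0 he]] := fin_pos_min (fun i => (hf i).1).
exists e; split => // x /andP[x0 xe] i; apply: (hf i).2.
by rewrite x0 (lt_le_trans xe (he i)).
Qed.

Lemma seq_crit {A : Type} (Q : R -> A -> Prop) (P : A -> Prop) :
  (forall u : nat -> A, (forall n, Q (n.+1%:R^-1) (u n)) -> exists N, P (u N)) ->
  exists d, 0 < d /\ forall a, Q d a -> P a.
Proof.
move=> h; apply: contrapT => hn.
have : forall n : nat, exists a, Q (n.+1%:R^-1) a /\ ~ P a.
  move=> n; apply: contrapT => hn2; apply: hn; exists (n.+1%:R^-1); split.
    by rewrite invr_gt0 ltr0n.
  move=> a hq; apply: contrapT => hp; apply: hn2; by exists a.
move=> /choice [u hu]; have [N hN] := h u (fun n => (hu n).1).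
exact: (hu N).2.
Qed.

End Basics.

Section Topo.
Context {R : realType} {X : normedModType R}.
Implicit Types (G Gt : set (X -> R)) (U : set X).

Definition allsn G := forall p, G p -> seminorm p.

Lemma ballF_open G n (ps : 'I_n -> X -> R) x eps : allsn G -> (forall i, G (ps i)) ->
  gen_open G [set y | forall i, ps i (y - x) < eps].
Proof.
move=> hG hps y /= hy.
have [e [e0 he]] := fin_pos_min (fun i => (eq_ind_r is_true (hy i) (subr_gt0 (ps i (y - x)) eps))).
exists n, ps; split => //; exists e; split => // z hz i.
apply: le_lt_trans (snB _ _ y (hG _ (hps i))) _.
have := he i; have := hz i; lra.
Qed.

Lemma ball1_open G p x eps : allsn G -> G p -> gen_open G [set y | p (y - x) < eps].
Proof.
move=> hG hp y /= hy; exists 1%N, (fun _ => p); split => //.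
exists (eps - p (y - x)); split; first by rewrite subr_gt0.
move=> z /(_ ord0) hz; apply: le_lt_trans (snB _ _ y (hG _ hp)) _; lra.
Qed.

Definition sconv G (u : nat -> X) x :=
  forall p, G p -> forall e, 0 < e -> exists N, forall n, (N <= n)%N -> p (u n - x) < e.

Lemma seq_conv_sconv G u x : allsn G -> seq_conv (gen_open G) u x <-> sconv G u x.
Proof.
move=> hG; split.
- move=> h p hp e e0; apply: (h [set y | p (y - x) < e]); first exact: ball1_open.
  by rewrite /= subrr (sn0 (hG _ hp)).
- move=> h U hU Ux; have [n [ps [hps [eps [eps0 hball]]]]] := hU x Ux.
  have : forall i, exists N, forall m, (N <= m)%N -> ps i (u m - x) < eps.
    by move=> i; apply: h.
  move=> /fin_max_nat [N hN]; exists N => m hm; apply: hball; exact: hN.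
Qed.

Definition hconv G (f : R -> X) z :=
  forall p, G p -> forall e, 0 < e -> exists d, 0 < d /\ forall h, 0 < h < d -> p (f h - z) < e.

Lemma hconvP G f z : allsn G ->
  (forall U, gen_open G U -> U z -> exists d, 0 < d /\ forall t, 0 < t < d -> U (f t))
  <-> hconv G f z.
Proof.
move=> hG; split.
- move=> h p hp e e0; apply: (h [set y | p (y - z) < e]); first exact: ball1_open.
  by rewrite /= subrr (sn0 (hG _ hp)).
- move=> h U hU Uz; have [n [ps [hps [eps [eps0 hball]]]]] := hU z Uz.
  have : forall i, exists d, 0 < d /\ forall t, 0 < t < d -> ps i (f t - z) < eps.
    by move=> i; apply: h.
  move=> /fin_min_pos [d [d0 hd]]; exists d; split => // t ht; apply: hball; exact: hd.
Qed.

Lemma saks_le Gt (v : X) c : saks_space Gt -> (forall p, Gt p -> p v <= c) -> `|v| <= c.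
Proof.
move=> [_ [_ [_ hs]]] h; rewrite leNgt; apply/negP => hlt.
have := hs v (`|v| - c); rewrite subr_gt0 => /(_ hlt) [p [hp hpv]].
have := h p hp; lra.
Qed.

Lemma saks_zero Gt (v : X) : saks_space Gt ->
  (forall p, Gt p -> forall e, 0 < e -> p v <= e) -> v = 0.
Proof.
move=> hs h; apply/normr0_eq0/eqP; rewrite eq_le normr_ge0 andbT.
apply/ler_addgt0Pr => e e0; rewrite add0r; apply: saks_le hs _ => p hp; exact: h.
Qed.

Lemma linear_gen_open G : allsn G -> linear_top (gen_open G).
Proof.
move=> hG; split; [split; [|split] | split].
- move=> x _; exists 0%N, (fun _ _ => 0); split; first by case.
  by exists 1; split.
- move=> F hF x [U [FU Ux]]; have [n [ps [hps [eps [eps0 hb]]]]] := hF U FU x Ux.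
  exists n, ps; split => //; exists eps; split => // y hy; exists U; split => //; exact: hb.
- move=> U V hU hV x [Ux Vx].
  have [n [ps [hps [e1 [e10 hb1]]]]] := hU x Ux.
  have [m [qs [hqs [e2 [e20 hb2]]]]] := hV x Vx.
  exists (n + m)%N, (fun i => match fintype.split i with inl j => ps j | inr k => qs k end).
  split; first by move=> i; case: (fintype.split i).
  exists (Num.min e1 e2); split; first by rewrite lt_min e10 e20.
  move=> y hy; split.
  + apply: hb1 => j; have := hy (lshift m j); rewrite (unsplitK (inl j)) lt_min.
    by case/andP.
  + apply: hb2 => j; have := hy (rshift n j); rewrite (unsplitK (inr j)) lt_min.
    by case/andP.
- move=> x y U hU Uxy; have [n [ps [hps [eps [eps0 hb]]]]] := hU _ Uxy.
  exists [set v | forall i, ps i (v - x) < eps / 2], [set w | forall i, ps i (w - y) < eps / 2].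
  split; first exact: ballF_open.
  split; first exact: ballF_open.
  split; first by move=> i /=; rewrite subrr (sn0 (hG _ (hps i))) divr_gt0.
  split; first by move=> i /=; rewrite subrr (sn0 (hG _ (hps i))) divr_gt0.
  move=> v w hv hw; apply: hb => i.
  have -> : v + w - (x + y) = (v - x) + (w - y) by rewrite opprD addrACA.
  apply: le_lt_trans (snD _ _ (hG _ (hps i))) _.
  have := hv i; have := hw i; lra.
- move=> a x U hU Uax; have [n [ps [hps [eps [eps0 hb]]]]] := hU _ Uax.
  pose S := \sum_(i < n) ps i x.
  have S0 : 0 <= S by apply: sumr_ge0 => i _; exact: sn_ge0 (hG _ (hps i)).
  have hS : forall i, ps i x <= S.
    move=> i; rewrite /S (bigD1 i) //= ler_wpDr // sumr_ge0 // => j _.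
    exact: sn_ge0 (hG _ (hps j)).
  pose d := eps / (2 * (S + 1)).
  have S10 : 0 < S + 1 by lra.
  have d0 : 0 < d by rewrite divr_gt0 // mulr_gt0.
  pose del := eps / (2 * (`|a| + d + 1)).
  have ad0 : 0 < `|a| + d + 1 by have := normr_ge0 a; lra.
  have del0 : 0 < del by rewrite divr_gt0 // mulr_gt0.
  exists d, [set v | forall i, ps i (v - x) < del]; split => //.
  split; first exact: ballF_open.
  split; first by move=> i /=; rewrite subrr (sn0 (hG _ (hps i))).
  move=> b v hba hv; apply: hb => i.
  have hp := hG _ (hps i).
  have -> : b *: v - a *: x = b *: (v - x) + (b - a) *: x.
    by rewrite scalerBr scalerBl addrA subrK.
  apply: le_lt_trans (snD (b *: (v - x)) ((b - a) *: x) hp) _.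
  rewrite (snZ _ _ hp) (snZ _ _ hp).
  have hb1 : `|b| <= `|a| + d.
    have := ler_normD (b - a) a; rewrite subrK; have := hba; lra.
  have e1 : `|b| * ps i (v - x) <= (`|a| + d) * del.
    apply: ler_pM => //; [exact: sn_ge0 | exact: ltW (hv i)].
  have e2 : (`|a| + d) * del < eps / 2.
    have hdel : del * (2 * (`|a| + d + 1)) = eps.
      by rewrite /del divfK // mulf_neq0 // gt_eqF.
    nra.
  have e3 : `|b - a| * ps i x <= d * S.
    apply: ler_pM => //; [exact: sn_ge0|exact: ltW].
  have e4 : d * S < eps / 2.
    have hd : d * (2 * (S + 1)) = eps.
      by rewrite /d divfK // mulf_neq0 // gt_eqF.
    nra.
  lra.
Qed.

Lemma gen_mixed Gt U : saks_space Gt -> gen_open Gt U -> mixed_open Gt U.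
Proof.
move=> [hG _] hU; exists (gen_open Gt); split; first exact: linear_gen_open.
by split => // B _ V.
Qed.

Lemma mixed_local Gt U r : mixed_open Gt U -> U 0 ->
  exists n (ps : 'I_n -> X -> R), (forall i, Gt (ps i)) /\ exists eps, 0 < eps /\
    forall v, `|v| <= r -> (forall i, ps i v < eps) -> U v.
Proof.
move=> [Ot [hlin [hag OU]]] hU0.
have [r0|rlt] := leP 0 r; last first.
  exists 0%N, (fun _ _ => 0); split; first by case.
  exists 1; split => // v hv; exfalso; have := normr_ge0 v; lra.
pose B := [set v : X | `|v| <= r].
have [V [hV hUV]] : exists V, gen_open Gt V /\ U `&` B = V `&` B.
  apply/(hag B _ (U `&` B)); first by exists r.
  by exists U.
have V0 : V 0.
  have : (U `&` B) 0 by split; [exact: hU0|]; rewrite /B /= normr0.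
  by rewrite hUV; case.
have [n [ps [hps [eps [eps0 hb]]]]] := hV 0 V0.
exists n, ps; split => //; exists eps; split => // v hv hpv.
have : (V `&` B) v by split => //; apply: hb => i; rewrite subr0.
by rewrite -hUV; case.
Qed.

End Topo.

Section Semi.
Context {R : realType} {X : normedModType R}.

Lemma small_inv (d : R) : 0 < d -> exists N, forall n, (N <= n)%N -> n.+1%:R^-1 < d.
Proof.
move=> d0; have hd : 0 <= d^-1 by rewrite invr_ge0 ltW.
have := archi_boundP hd => h.
exists (Num.Def.archi_bound d^-1) => n hn.
rewrite -[d]invrK ltf_pV2 ?posrE ?invr_gt0 ?ltr0n //.
apply: lt_le_trans h _; rewrite ler_nat; exact: leq_trans hn (leqnSn n).
Qed.

Lemma inv_le1 n : n.+1%:R^-1 <= (1 : R).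
Proof. by rewrite invr_le1 ?ler1n ?unitfE ?pnatr_eq0 ?ltr0n. Qed.

Lemma inv_gt0n n : 0 < n.+1%:R^-1 :> R.
Proof. by rewrite invr_gt0 ltr0n. Qed.

Variable (Gt : set (X -> R)) (T : R -> {linear X -> X}).
Hypothesis hS : saks_space Gt.
Hypothesis hT : bicont_semigroup Gt T.

Lemma hGt : allsn Gt. Proof. by case: hS. Qed.

Lemma T0 x : T 0 x = x. Proof. by case: hT. Qed.

Lemma TD t s x : 0 <= t -> 0 <= s -> T (t + s) x = T t (T s x).
Proof. by case: hT => _ [h _]; apply: h. Qed.

Lemma TC t s x : 0 <= t -> 0 <= s -> T t (T s x) = T s (T t x).
Proof. by move=> ht hs; rewrite -!TD // addrC. Qed.

Lemma Tbound K : exists C, 0 <= C /\ forall t x, 0 <= t <= K -> `|T t x| <= C * `|x|.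
Proof.
case: hT => _ [_ [_ [[M [w [M1 hb]]] _]]].
exists (M * expR (`|w| * `|K|)); split; first by rewrite mulr_ge0 ?expR_ge0 //; lra.
move=> t x /andP[t0 tK]; apply: le_trans (hb t x t0) _.
apply: ler_wpM2r => //; apply: ler_wpM2l; first lra.
rewrite ler_expR; apply: le_trans (ler_norm _) _.
rewrite normrM (ger0_norm t0); apply: ler_wpM2l => //; apply: le_trans tK (ler_norm _).
Qed.

Lemma Tcont0 x p e : Gt p -> 0 < e ->
  exists d, 0 < d /\ forall t, 0 <= t -> t < d -> p (T t x - x) < e.
Proof.
move=> hp e0; case: hT => _ [_ [hc _]].
have := hc x 0 (lexx 0) [set y | p (y - x) < e] (@ball1_open _ _ Gt p x e hGt hp).
rewrite /= T0 subrr (sn0 (hGt hp)) => /(_ e0) [d [d0 hd]].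
exists d; split => // t t0 td; apply: hd => //; by rewrite subr0 ger0_norm.
Qed.

Lemma Tbi (u : nat -> X) x r t0 p e : (forall n, `|u n| <= r) -> sconv Gt u x ->
  0 <= t0 -> Gt p -> 0 < e ->
  exists N, forall n, (N <= n)%N -> forall t, 0 <= t <= t0 -> p (T t (u n - x)) < e.
Proof.
move=> hr hu ht0 hp e0; case: hT => _ [_ [_ [_ hb]]].
have := hb u x (ex_intro _ r hr) ((seq_conv_sconv _ _ hGt).2 hu) t0 ht0
  [set y | p (y - 0) < e] (@ball1_open _ _ Gt p 0 e hGt hp).
rewrite /= subrr (sn0 (hGt hp)) => /(_ e0) [N hN].
exists N => n hn t ht; have := hN n hn t ht; by rewrite subr0.
Qed.

Lemma UC x K p e : 0 <= K -> Gt p -> 0 < e ->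
  exists eta, 0 < eta /\ forall s r, 0 <= s <= K -> 0 <= r < eta ->
    p (T (s + r) x - T s x) < e.
Proof.
move=> K0 hp e0.
suff hcrit : forall u : nat -> (R * R)%type,
    (forall n, (fun d sr => 0 <= sr.1 <= K /\ 0 <= sr.2 < d) (n.+1%:R^-1) (u n)) ->
    exists N, (fun sr => p (T (sr.1 + sr.2) x - T sr.1 x) < e) (u N).
  have [d [d0 hd]] := @seq_crit R (R * R)%type
    (fun d sr => 0 <= sr.1 <= K /\ 0 <= sr.2 < d)
    (fun sr => p (T (sr.1 + sr.2) x - T sr.1 x) < e) hcrit.
  by exists d; split => // s r hs hr; apply: (hd (s, r)).
move=> u hu.
have [C [C0 hC]] := Tbound 1.
pose v n := T (u n).2 x - x.
have hvb : forall n, `|v n| <= C * `|x| + `|x|.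
  move=> n; apply: le_trans (ler_normB _ _) _; apply: lerD => //.
  apply: hC; have [_ /andP[h1 h2]] := hu n; rewrite h1 /=.
  exact: ltW (lt_le_trans h2 (inv_le1 n)).
have hv : sconv Gt v 0.
  move=> q hq e' e'0; have [d [d0 hd]] := Tcont0 x hq e'0.
  have [N hN] := small_inv d0; exists N => n hn; rewrite subr0.
  have [_ /andP[h1 h2]] := hu n; apply: hd => //.
  exact: lt_trans h2 (hN n hn).
have [N hN] := Tbi hvb hv K0 hp e0.
exists N; have [hs _] := hu N; have := hN N (leqnn N) (u N).1 hs.
have [_ /andP[h1 _]] := hu N; have [/andP[s0 _] _] := hu N.
by rewrite subr0 /v linearB /= -TD.
Qed.

Lemma UC2 x K p e : 0 <= K -> Gt p -> 0 < e ->
  exists eta, 0 < eta /\ forall s s', 0 <= s <= K -> 0 <= s' <= K -> `|s - s'| < eta ->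
    p (T s x - T s' x) < e.
Proof.
move=> K0 hp e0; have [eta [eta0 h]] := UC x K0 hp e0.
exists eta; split => // s s' hs hs' hss.
have hp' := hGt hp.
have [le|lt] := leP s' s.
- have := h s' (s - s') hs'; rewrite [s' + _]addrC subrK; apply.
  by rewrite subr_ge0 le /=; rewrite ger0_norm ?subr_ge0 in hss.
- rewrite snBC //; have := h s (s' - s) hs; rewrite [s + _]addrC subrK; apply.
  by rewrite subr_ge0 (ltW lt) /=; rewrite ltr0_norm ?subr_lt0 // opprB in hss.
Qed.

Lemma sconv_uniq (u : nat -> X) y z : sconv Gt u y -> sconv Gt u z -> y = z.
Proof.
move=> hy hz; apply/eqP; rewrite -subr_eq0; apply/eqP; apply: (saks_zero hS) => p hp e e0.
have e20 : 0 < e / 2 by rewrite divr_gt0.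
have [N1 h1] := hy p hp _ e20; have [N2 h2] := hz p hp _ e20.
have := h1 (maxn N1 N2) (leq_maxl _ _); have := h2 (maxn N1 N2) (leq_maxr _ _).
have := snB y z (u (maxn N1 N2)) (hGt hp); rewrite (snBC y (u _) (hGt hp)); lra.
Qed.

Lemma sconvB (u v : nat -> X) y z : sconv Gt u y -> sconv Gt v z ->
  sconv Gt (fun n => u n - v n) (y - z).
Proof.
move=> hy hz p hp e e0; have e20 : 0 < e / 2 by rewrite divr_gt0.
have [N1 h1] := hy p hp _ e20; have [N2 h2] := hz p hp _ e20.
exists (maxn N1 N2) => n hn.
have := h1 n (leq_trans (leq_maxl _ _) hn); have := h2 n (leq_trans (leq_maxr _ _) hn).
have -> : u n - v n - (y - z) = (u n - y) - (v n - z) by rewrite !opprD !opprK addrACA.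
have := snD (u n - y) (- (v n - z)) (hGt hp); rewrite (snN _ (hGt hp)); lra.
Qed.

End Semi.

Lemma TZ {R : realType} {X : normedModType R} (T : {linear X -> X}) (a : R) x :
  T (a *: x) = a *: T x.
Proof. exact: linearZ. Qed.

Section Gen.
Context {R : realType} {X : normedModType R}.
Variable (Gt : set (X -> R)) (T : R -> {linear X -> X}).
Hypothesis hS : saks_space Gt.
Hypothesis hT : bicont_semigroup Gt T.

Let hGt := hGt hS.

Lemma andP_intro (a b : bool) : a -> b -> a && b.
Proof. by move=> -> ->. Qed.

Lemma G_local G q eps r : generates G (mixed_open Gt) -> G q -> 0 < eps ->
  exists n (ps : 'I_n -> X -> R), (forall i, Gt (ps i)) /\ exists e', 0 < e' /\
    forall v, `|v| <= r -> (forall i, ps i v < e') -> q v < eps.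
Proof.
move=> [hG [_ hgen]] hq e0.
have hU : mixed_open Gt [set v | q (v - 0) < eps].
  by apply/hgen; apply: (@ball1_open _ _ G q 0 eps hG hq).
have := mixed_local r hU; rewrite /= subrr (sn0 (hG _ hq)) => /(_ e0).
move=> [n [ps [hps [e' [e'0 hb]]]]]; exists n, ps; split => //; exists e'; split => //.
by move=> v hv hpv; have := hb v hv hpv; rewrite subr0.
Qed.

Lemma bdd_sconv G (u : nat -> X) x r : generates G (mixed_open Gt) ->
  (forall n, `|u n| <= r) -> sconv Gt u x -> sconv G u x.
Proof.
move=> hG hr hu q hq e e0.
have [n [ps [hps [e' [e'0 hb]]]]] := G_local (r + `|x|) hG hq e0.
have : forall i, exists N, forall m, (N <= m)%N -> ps i (u m - x) < e'.
  by move=> i; apply: hu.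
move=> /fin_max_nat [N hN]; exists N => m hm; apply: hb; last exact: hN.
apply: le_trans (ler_normB _ _) _; exact: lerD.
Qed.

Lemma gen_rel_hconv y z : gen_rel Gt T y z ->
  hconv Gt (fun h => h^-1 *: (T h y - y)) z.
Proof. by move=> [h _]; apply/(hconvP _ _ hGt). Qed.

Lemma gen_rel_uniq y z1 z2 : gen_rel Gt T y z1 -> gen_rel Gt T y z2 -> z1 = z2.
Proof.
move=> /gen_rel_hconv h1 /gen_rel_hconv h2.
apply/eqP; rewrite -subr_eq0; apply/eqP; apply: (saks_zero hS) => p hp e e0.
have e20 : 0 < e / 2 by rewrite divr_gt0.
have [d1 [d10 hd1]] := h1 p hp _ e20; have [d2 [d20 hd2]] := h2 p hp _ e20.
pose h := Num.min d1 d2 / 2.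
have hm : 0 < Num.min d1 d2 by rewrite lt_min d10 d20.
have hm1 : Num.min d1 d2 <= d1 by rewrite ge_min lexx.
have hm2 : Num.min d1 d2 <= d2 by rewrite ge_min lexx orbT.
have h0 : 0 < h by rewrite divr_gt0.
have hd1' : h < d1 by rewrite /h; lra.
have hd2' : h < d2 by rewrite /h; lra.
have a := hd1 h (andP_intro h0 hd1'); have b := hd2 h (andP_intro h0 hd2').
have H := snB z1 z2 (h^-1 *: (T h y - y)) (hGt hp).
rewrite (snBC z1 (h^-1 *: (T h y - y)) (hGt hp)) in H.
move: a b H; set u := p (_ - z1); set v := p (_ - z2); set w := p (z1 - z2).
clear; move=> a b H; lra.
Qed.

Lemma gen_relZ y z c : gen_rel Gt T y z -> gen_rel Gt T (c *: y) (c *: z).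
Proof.
move=> hyz; have hc := gen_rel_hconv hyz; case: hyz => _ [c0 hc0].
have E : forall h, T h (c *: y) - c *: y = c *: (T h y - y).
  by move=> h; rewrite TZ scalerBr.
split.
- apply/(hconvP _ _ hGt) => p hp e e0.
  have e'0 : 0 < e / (`|c| + 1) by rewrite divr_gt0 // ltr_wpDl.
  have [d [d0 hd]] := hc p hp _ e'0; exists d; split => // h hh.
  rewrite E scalerA mulrC -scalerA -scalerBr (snZ _ _ (hGt hp)).
  have := hd h hh; set a := p _ => ha.
  have a0 : 0 <= a by apply: sn_ge0 (hGt hp).
  have : `|c| * a <= `|c| * (e / (`|c| + 1)) by apply: ler_wpM2l => //; exact: ltW.
  suff : `|c| * (e / (`|c| + 1)) < e by lra.
  have ce : e / (`|c| + 1) * (`|c| + 1) = e by rewrite divfK // gt_eqF // ltr_wpDl.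
  have : 0 < e / (`|c| + 1) by [].
  set k := e / (`|c| + 1) in ce *; move=> k0; rewrite -ce mulrDr mulr1 [`|c| * _]mulrC ltrDl; exact: k0.
- exists (`|c| * c0) => h hh; rewrite E normrZ -mulrA.
  by apply: ler_wpM2l => //; apply: hc0.
Qed.

Variable (D : set X) (A : X -> X).
Hypothesis hGen : is_generator Gt T D A.

Lemma gen_rel_T x s : D x -> 0 <= s -> gen_rel Gt T (T s x) (T s (A x)).
Proof.
move=> Dx s0; have hx := hGen.2 x Dx; have hc := gen_rel_hconv hx.
case: hx => _ [c0 hc0].
have E : forall h, 0 <= h -> h^-1 *: (T h (T s x) - T s x) = T s (h^-1 *: (T h x - x)).
  by move=> h h0; rewrite (TC hT x h0 s0) (TZ (T s)) (linearB (T s)).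
have [C [C0 hC]] := Tbound hT s.
split.
- apply/(hconvP _ _ hGt) => p hp e e0.
  suff hcrit : forall u : nat -> R, (forall n, (fun d h => 0 < h < d) (n.+1%:R^-1) (u n)) ->
      exists N, (fun h => p (h^-1 *: (T h (T s x) - T s x) - T s (A x)) < e) (u N).
    have [d [d0 hd]] := @seq_crit R R (fun d h => 0 < h < d)
      (fun h => p (h^-1 *: (T h (T s x) - T s x) - T s (A x)) < e) hcrit.
    by exists d; split => // h hh; apply: hd.
  move=> u hu.
  pose v n := (u n)^-1 *: (T (u n) x - x).
  have hvb : forall n, `|v n| <= c0.
    move=> n; have [h1 h2] := andP (hu n); rewrite /v normrZ gtr0_norm ?invr_gt0 //.
    rewrite mulrC; apply: hc0; rewrite h1 /=; exact: ltW (lt_le_trans h2 (inv_le1 n)).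
  have hv : sconv Gt v (A x).
    move=> q hq e' e'0; have [d [d0 hd]] := hc q hq _ e'0.
    have [N hN] := small_inv d0; exists N => n hn; apply: hd.
    have [h1 h2] := andP (hu n); rewrite h1 /=; exact: lt_trans h2 (hN n hn).
  have [N hN] := Tbi hS hT hvb hv s0 hp e0.
  exists N; have [h1 _] := andP (hu N); rewrite /= E ?ltW //.
  have := hN N (leqnn N) s; rewrite s0 lexx => /(_ isT).
  by rewrite linearB.
- exists (C * c0) => h hh; have [h1 h2] := andP hh.
  rewrite (TC hT x (ltW h1) s0) -(linearB (T s)).
  apply: (@le_trans _ _ (C * `|T h x - x| / h)).
    apply: ler_wpM2r; first by rewrite invr_ge0 ltW.
    by apply: hC; rewrite s0 lexx.
  by rewrite -mulrA; apply: ler_wpM2l => //; apply: hc0.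
Qed.

Lemma D_T x s : D x -> 0 <= s -> D (T s x) /\ A (T s x) = T s (A x).
Proof.
move=> Dx s0; have h := gen_rel_T Dx s0.
have DT : D (T s x) by apply/(hGen.1); exists (T s (A x)).
split => //; apply: gen_rel_uniq (hGen.2 _ DT) h.
Qed.

End Gen.

Definition len {R : realType} (a a' b c : R) := Num.max 0 (Num.min c a' - Num.max b a).

Ltac mm1 := match goal with |- context[Num.max ?x ?y] => case: (leP x y) | |- context [Num.min ?x ?y] => case: (leP x y) end.
Ltac mmcases := repeat mm1; intros; try lra.

Section Len.
Context {R : realType}.

Lemma len_ge0 (a a' b c : R) : 0 <= len a a' b c.
Proof. by rewrite /len le_max lexx. Qed.

Lemma len_add (a a' b c d : R) : b <= c -> c <= d -> a <= a' ->
  len a a' b d = len a a' b c + len a a' c d.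
Proof. move=> h1 h2 h3; rewrite /len; mmcases. Qed.

Lemma len_pos (a a' b c : R) : 0 < len a a' b c -> a < c /\ b < a'.
Proof. rewrite /len; mmcases; split; lra. Qed.

Lemma len_00 (a a' : R) : 0 <= a -> len a a' 0 0 = 0.
Proof. move=> h; rewrite /len; mmcases. Qed.

Lemma len_sum (d b c : R) M : 0 < d -> 0 <= b <= c ->
  \sum_(k < M) len (k%:R * d) (k.+1%:R * d) b c = Num.min c (M%:R * d) - Num.min b (M%:R * d).
Proof.
move=> d0 /andP[b0 bc]; elim: M => [|M IH].
  rewrite big_ord0 mul0r; mmcases.
rewrite big_ord_recr /= IH /len.
have hM : 0 <= M%:R * d by rewrite mulr_ge0 // ltW.
rewrite -[M.+1%:R * d]/(M.+1%:R * d) mulrSr mulrDl mul1r.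
move: hM; set m := M%:R * d => hM.
mmcases.
Qed.

End Len.

Section WSum.
Context {R : realType} {X : normedModType R}.

Lemma wsum (p : X -> R) M (lam : 'I_M -> R) (v : 'I_M -> X) w e : seminorm p ->
  (forall k, 0 <= lam k) -> (forall k, 0 < lam k -> p (v k - w) <= e) ->
  p (\sum_(k < M) lam k *: v k - (\sum_(k < M) lam k) *: w) <= (\sum_(k < M) lam k) * e.
Proof.
move=> hp h0 hv; rewrite scaler_suml -sumrB.
apply: le_trans (sn_sum _ hp) _; rewrite mulr_suml; apply: ler_sum => k _.
rewrite -scalerBr (snZ _ _ hp) ger0_norm //.
have := h0 k; rewrite le_eqVlt => /orP[/eqP <-|hk]; first by rewrite !mul0r.
by apply: ler_wpM2l; [exact: ltW|exact: hv].
Qed.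

Lemma wnorm M (lam : 'I_M -> R) (v : 'I_M -> X) B :
  (forall k, 0 <= lam k) -> (forall k, 0 < lam k -> `|v k| <= B) ->
  `|\sum_(k < M) lam k *: v k| <= (\sum_(k < M) lam k) * B.
Proof.
move=> h0 hv; apply: le_trans (ler_norm_sum _ _ _) _.
rewrite mulr_suml; apply: ler_sum => k _; rewrite normrZ ger0_norm //.
have := h0 k; rewrite le_eqVlt => /orP[/eqP <-|hk]; first by rewrite !mul0r.
by apply: ler_wpM2l; [exact: ltW|exact: hv].
Qed.

End WSum.

Section Integral.
Context {R : realType} {X : normedModType R}.
Variable (Gt : set (X -> R)) (T : R -> {linear X -> X}).
Hypothesis hS : saks_space Gt.
Hypothesis hT : bicont_semigroup Gt T.
Variable x : X.

Definition dl (n : nat) : R := n.+1%:R^-1.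
Definition NM (n : nat) := (n.+1 * 2)%N.
Definition Gn n c := \sum_(k < NM n) len (k%:R * dl n) (k.+1%:R * dl n) 0 c *: T (k%:R * dl n) x.
Definition RS (P : nat) (b c : R) :=
  \sum_(i < P) ((c - b) / P%:R) *: T (b + i%:R * ((c - b) / P%:R)) x.

Lemma dl_gt0 n : 0 < dl n. Proof. by rewrite /dl invr_gt0 ltr0n. Qed.

Lemma NMdl n : (NM n)%:R * dl n = 2.
Proof. by rewrite /NM /dl natrM mulrAC mulfV ?mul1r // pnatr_eq0. Qed.

Lemma kdl_ge0 (k : nat) n : 0 <= k%:R * dl n.
Proof. by rewrite mulr_ge0 // ltW // dl_gt0. Qed.

Lemma kdlS (k : nat) n : k.+1%:R * dl n = k%:R * dl n + dl n.
Proof. by rewrite -[k.+1%:R]/(1 *+ k.+1) mulrSr mulrDl mul1r. Qed.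

Lemma Gn_diff n b c : 0 <= b <= c ->
  Gn n c - Gn n b = \sum_(k < NM n) len (k%:R * dl n) (k.+1%:R * dl n) b c *: T (k%:R * dl n) x.
Proof.
move=> /andP[b0 bc]; rewrite /Gn -sumrB; apply: eq_bigr => k _.
rewrite (@len_add _ _ _ 0 b c) //; last by rewrite kdlS lerDl ltW // dl_gt0.
by rewrite scalerDl [X in X - _]addrC addrK.
Qed.

Lemma sumlen n b c : 0 <= b <= c -> c <= 2 ->
  \sum_(k < NM n) len (k%:R * dl n) (k.+1%:R * dl n) b c = c - b.
Proof.
move=> hbc c2; rewrite len_sum ?dl_gt0 // NMdl.
case/andP: hbc => b0 bc.
by rewrite !min_l // (le_trans bc c2).
Qed.

Lemma Gn0 n : Gn n 0 = 0.
Proof. by rewrite /Gn big1 // => k _; rewrite len_00 ?kdl_ge0 // scale0r. Qed.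

Let hGt := hGt hS.

Lemma Gn_loc p e : Gt p -> 0 < e -> exists eta, 0 < eta /\ forall n, dl n < eta ->
  forall b c, 0 <= b <= c -> c <= 2 -> c - b < eta ->
  p (Gn n c - Gn n b - (c - b) *: T b x) <= (c - b) * e.
Proof.
move=> hp e0; have [eta [eta0 he]] := UC2 hS hT x (ler0n R 2) hp e0.
exists eta; split => // n hn b c hbc c2 hcb.
rewrite Gn_diff // -(sumlen n hbc c2).
apply: wsum (hGt hp) _ _ => [k|k hk]; first exact: len_ge0.
have [h1 h2] := len_pos hk; case/andP: hbc => b0 bc.
apply: ltW; apply: he.
- by rewrite kdl_ge0 /=; apply: ltW; apply: lt_le_trans h1 c2.
- by rewrite b0 /= (le_trans bc c2).
- rewrite kdlS in h2; have := dl_gt0 n.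
  have [hkb|hkb] := leP b (k%:R * dl n).
    rewrite ger0_norm ?subr_ge0 //; lra.
  rewrite ltr0_norm ?subr_lt0 //; lra.
Qed.

Lemma Gn_norm : exists B, 0 <= B /\ forall n b c, 0 <= b <= c -> c <= 2 ->
  `|Gn n c - Gn n b| <= (c - b) * B.
Proof.
have [C [C0 hC]] := Tbound hT 2.
exists (C * `|x|); split; first by rewrite mulr_ge0.
move=> n b c hbc c2; rewrite Gn_diff // -(sumlen n hbc c2).
apply: wnorm => [k|k hk]; first exact: len_ge0.
have [h1 _] := len_pos hk; apply: hC; rewrite kdl_ge0 /=.
case/andP: hbc => _ bc; apply: ltW; apply: lt_le_trans h1 c2.
Qed.

End Integral.

Section Integral2.
Context {R : realType} {X : normedModType R}.
Variable (Gt : set (X -> R)) (T : R -> {linear X -> X}).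
Hypothesis hS : saks_space Gt.
Hypothesis hT : bicont_semigroup Gt T.
Hypothesis hC : complete_saks Gt.

Let hGt := hGt hS.

Lemma complete_seq (u : nat -> X) r : (forall n, `|u n| <= r) ->
  (forall p, Gt p -> forall e, 0 < e -> exists N, forall n m, (N <= n)%N -> (N <= m)%N ->
     p (u n - u m) < e) ->
  exists y, sconv Gt u y.
Proof.
move=> hr hc.
have := (hC : complete_top _) nat (fun a b => is_true (a <= b)%N) 0%N leqnn (fun i j k hij hjk => leq_trans hij hjk)
  (fun i j => ex_intro _ (maxn i j) (conj (leq_maxl i j) (leq_maxr i j))) u.
case.
  move=> U hU U0; have [n [ps [hps [eps [eps0 hb]]]]] := mixed_local (r + r) hU U0.
  have : forall i, exists N, forall k, (N <= k)%N ->
      (forall a b, (k <= a)%N -> (k <= b)%N -> ps i (u a - u b) < eps).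
    move=> i; have [N hN] := hc _ (hps i) _ eps0; exists N => k hk a b ha hb'.
    by apply: hN; [exact: leq_trans hk ha|exact: leq_trans hk hb'].
  move=> /fin_max_nat [N hN]; exists N => a b ha hb'; apply: hb.
    by apply: le_trans (ler_normB _ _) _; apply: lerD.
  by move=> i; exact: (hN N (leqnn N) i a b ha hb').
move=> y hy; exists y => p hp e e0.
have := hy [set z | p (z - y) < e].
rewrite /= subrr (sn0 (hGt hp)) => /(_ (gen_mixed hS (@ball1_open _ _ Gt p y e hGt hp)) e0).
by case=> N hN; exists N => n hn; apply: hN.
Qed.

Lemma lim_le p (u : nat -> X) y w a N0 : Gt p -> sconv Gt u y ->
  (forall n, (N0 <= n)%N -> p (u n - w) <= a) -> p (y - w) <= a.
Proof.
move=> hp hu hb; apply/ler_addgt0Pr => e e0.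
have [N hN] := hu p hp e e0.
have := hN (maxn N N0) (leq_maxl _ _); have := hb (maxn N N0) (leq_maxr _ _).
have := snB y w (u (maxn N N0)) (hGt hp); rewrite (snBC y (u _) (hGt hp)).
set a1 := p (y - w); set a2 := p (_ - w); set a3 := p (_ - y); clear; lra.
Qed.

Variable x : X.

Lemma Gn_RS p e : Gt p -> 0 < e -> exists eta, 0 < eta /\ forall n, dl n < eta ->
  forall b c (P : nat), 0 <= b <= c -> c <= 2 -> (0 < P)%N -> (c - b) / P%:R < eta ->
  p (Gn T x n c - Gn T x n b - RS T x P b c) <= (c - b) * e.
Proof.
move=> hp e0; have [eta [eta0 he]] := Gn_loc hS hT x hp e0.
exists eta; split => // n hn b c P hbc c2 P0 hP.
case/andP: hbc => b0 bc.
have Pn0 : P%:R != 0 :> R by rewrite pnatr_eq0 -lt0n.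
set hh := (c - b) / P%:R in hP *.
have hh0 : 0 <= hh by rewrite /hh divr_ge0 // subr_ge0.
pose t (i : nat) := b + i%:R * hh.
have tP : t P = c by rewrite /t /hh [P%:R * _]mulrC divfK // addrC subrK.
have t0 : t 0%N = b by rewrite /t mul0r addr0.
have tS : forall i, t i.+1 = t i + hh.
  by move=> i; rewrite /t -[i.+1%:R]/(1 *+ i.+1) mulrSr mulrDl mul1r addrA.
have tge : forall i, b <= t i by move=> i; rewrite /t lerDl mulr_ge0.
have tle : forall i, (i <= P)%N -> t i <= c.
  by move=> i hi; rewrite -tP /t lerD2l ler_wpM2r // ler_nat.
have hterm : forall i, (i < P)%N ->
    p (Gn T x n (t i.+1) - Gn T x n (t i) - hh *: T (t i) x) <= hh * e.
  move=> i hi; have E : t i.+1 - t i = hh by rewrite tS addrC addKr.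
  have := he n hn (t i) (t i.+1); rewrite E; apply.
  - by rewrite (le_trans b0 (tge i)) /= tS lerDl.
  - exact: le_trans (tle _ hi) c2.
  - exact: hP.
have tel := telescope_sumr (fun i => Gn T x n (t i)) (leq0n P).
rewrite tP t0 big_mkord in tel.
rewrite -tel /RS -sumrB.
apply: le_trans (sn_sum _ (hGt hp)) _.
apply: (@le_trans _ _ (\sum_(i < P) hh * e)).
  by apply: ler_sum => i _; apply: hterm.
rewrite sumr_const card_ord -mulr_natr mulrAC /hh divfK //.
Qed.

Lemma Gn_cauchy c : 0 <= c <= 2 -> forall p, Gt p -> forall e, 0 < e ->
  exists N, forall n m, (N <= n)%N -> (N <= m)%N -> p (Gn T x n c - Gn T x m c) < e.
Proof.
move=> /andP[c0 c2] p hp e e0.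
have e50 : 0 < e / 5 by rewrite divr_gt0.
have [eta [eta0 he]] := Gn_RS hp e50.
have [N hN] := small_inv eta0.
have eta20 : 0 < eta / 2 by rewrite divr_gt0.
have [Q hQ] := small_inv eta20.
have hQ' := hQ Q (leqnn Q).
have hP : (c - 0) / Q.+1%:R < eta.
  have h2 : 2 * Q.+1%:R^-1 < eta :> R by move: hQ'; set q := Q.+1%:R^-1; lra.
  rewrite subr0; apply: le_lt_trans h2.
  by apply: ler_wpM2r; [rewrite invr_ge0 ler0n|].
exists N => n m hn hm.
have h1 := he n (hN n hn) 0 c Q.+1 (andP_intro (lexx 0) c0) c2 (ltn0Sn Q) hP.
have h2 := he m (hN m hm) 0 c Q.+1 (andP_intro (lexx 0) c0) c2 (ltn0Sn Q) hP.
rewrite Gn0 !subr0 in h1; rewrite Gn0 !subr0 in h2.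
have := snB (Gn T x n c) (Gn T x m c) (RS T x Q.+1 0 c) (hGt hp).
rewrite (snBC (RS T x Q.+1 0 c) _ (hGt hp)).
move: h1 h2; set a1 := p (_ - RS _ _ _ _ _); set a2 := p (Gn T x m c - _).
set a3 := p (_ - _) => h1 h2 h3.
have : c * (e / 5) <= 2 * (e / 5) by apply: ler_wpM2r => //; exact: ltW.
move=> h4; lra.
Qed.

End Integral2.

Lemma id_gen {R : realType} {V : normedModType R} (h : R) (P Q S U W : V) : h != 0 ->
  h^-1 *: (P - Q - S) - (U - W) = h^-1 *: (P - S - h *: U) - h^-1 *: (Q - h *: W).
Proof.
move=> h0; rewrite !scalerBr !scalerA mulVf // !scale1r !opprB.
rewrite [h^-1 *: P - h^-1 *: Q - _]addrAC addrACA [RHS]addrACA.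
by congr (_ + _); rewrite addrC.
Qed.

Lemma id_sc {R : realType} {V : normedModType R} (m a : R) (F x : V) : m * a = 1 ->
  m *: F - x = m *: (F - a *: x).
Proof. by move=> h; rewrite scalerBr scalerA h scale1r. Qed.

Lemma id_sh {V : zmodType} (P Q S : V) : P - Q - S = (P - S) - (Q - 0).
Proof. by rewrite subr0 addrAC. Qed.

Section Integral3.
Context {R : realType} {X : normedModType R}.
Variable (Gt : set (X -> R)) (T : R -> {linear X -> X}).
Hypothesis hS : saks_space Gt.
Hypothesis hT : bicont_semigroup Gt T.
Hypothesis hC : complete_saks Gt.
Variable x : X.

Let hGt := hGt hS.

Lemma sn_le_norm p v : Gt p -> p v <= `|v|.
Proof. by move=> hp; case: hS => _ [_ [h _]]; apply: h. Qed.

Lemma F_props : exists (F : R -> X) B, 0 <= B /\ F 0 = 0 /\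
  (forall b c, 0 <= b <= c -> c <= 2 -> `|F c - F b| <= (c - b) * B) /\
  (forall p, Gt p -> forall e, 0 < e -> exists eta, 0 < eta /\ forall b c, 0 <= b <= c -> c <= 2 ->
     c - b < eta -> p (F c - F b - (c - b) *: T b x) <= (c - b) * e) /\
  (forall p, Gt p -> forall e, 0 < e -> exists eta, 0 < eta /\ forall b c (P : nat), 0 <= b <= c ->
     c <= 2 -> (0 < P)%N -> (c - b) / P%:R < eta -> p (F c - F b - RS T x P b c) <= (c - b) * e).
Proof.
have [B [B0 hB]] := Gn_norm hT x.
have hF : forall c, exists y, 0 <= c <= 2 -> sconv Gt (fun n => Gn T x n c) y.
  move=> c; case: (boolP (0 <= c <= 2)) => hc; last by exists 0.
  have hb : forall n, `|Gn T x n c| <= c * B.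
    move=> n; have := hB n 0 c; rewrite Gn0 !subr0; apply.
      by case/andP: hc => -> _; rewrite lexx.
    by case/andP: hc.
  have [y hy] := complete_seq hS hC hb (Gn_cauchy hS hT x hc).
  by exists y.
have [F hFc] := choice hF.
have hd : forall b c, 0 <= b <= c -> c <= 2 ->
    sconv Gt (fun n => Gn T x n c - Gn T x n b) (F c - F b).
  move=> b c /andP[b0 bc] c2.
  have h1 := hFc c (andP_intro (le_trans b0 bc) c2).
  have h2 := hFc b (andP_intro b0 (le_trans bc c2)).
  exact: (sconvB hS h1 h2).
exists F, B; split => //; split.
  apply: (sconv_uniq hS (hFc 0 _)); first by rewrite lexx ler0n.
  by move=> p hp e e0; exists 0%N => n _; rewrite Gn0 subrr (sn0 (hGt hp)).
split.
  move=> b c hbc c2; apply: (saks_le hS) => p hp.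
  rewrite -[F c - F b]subr0; apply: (lim_le hS (N0 := 0%N) hp (hd b c hbc c2)) => n _.
  rewrite subr0; apply: le_trans (sn_le_norm _ hp) _; exact: hB.
split.
  move=> p hp e e0; have [eta [eta0 he]] := Gn_loc hS hT x hp e0.
  have [N hN] := small_inv eta0.
  exists eta; split => // b c hbc c2 hcb.
  apply: (lim_le hS (N0 := N) hp (hd b c hbc c2)) => n hn.
  exact: he n (hN n hn) b c hbc c2 hcb.
move=> p hp e e0; have [eta [eta0 he]] := Gn_RS hS hT x hp e0.
have [N hN] := small_inv eta0.
exists eta; split => // b c P hbc c2 P0 hP.
apply: (lim_le hS (N0 := N) hp (hd b c hbc c2)) => n hn.
exact: he n (hN n hn) b c P hbc c2 P0 hP.
Qed.

End Integral3.

Section Dense.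
Context {R : realType} {X : normedModType R}.
Variable (Gt : set (X -> R)) (T : R -> {linear X -> X}) (D : set X) (A : X -> X).
Hypothesis hS : saks_space Gt.
Hypothesis hT : bicont_semigroup Gt T.
Hypothesis hC : complete_saks Gt.
Hypothesis hGen : is_generator Gt T D A.

Let hGt := hGt hS.

Lemma denseD x : exists y : nat -> X, (forall n, D (y n)) /\ (exists r, forall n, `|y n| <= r) /\
  sconv Gt y x.
Proof.
have [F [B [B0 [F0 [hN [hL hR]]]]]] := F_props hS hT hC x.
have [C [C0 hC2]] := Tbound hT 2.
have RSn : forall b c P, 0 <= b <= c -> c <= 2 -> (0 < P)%N ->
    `|RS T x P b c| <= (c - b) * (C * `|x|).
  move=> b c P /andP[b0 bc] c2 P0; rewrite /RS.
  have Pn0 : P%:R != 0 :> R by rewrite pnatr_eq0 -lt0n.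
  set hh := (c - b) / P%:R.
  have hh0 : 0 <= hh by rewrite /hh divr_ge0 // subr_ge0.
  have -> : c - b = \sum_(i < P) hh by rewrite sumr_const card_ord -mulr_natr /hh divfK.
  apply: (wnorm (lam := fun _ => hh)) => // k _; apply: hC2.
  have hk : k%:R * hh <= c - b.
    rewrite -[c - b](divfK Pn0) -/hh mulrC ler_wpM2l // ler_nat; exact: ltnW.
  apply/andP; split; [rewrite addr_ge0 // mulr_ge0 // | lra].
have RSc : forall b c, 0 <= b <= c -> c <= 2 -> sconv Gt (fun P => RS T x P.+1 b c) (F c - F b).
  move=> b c hbc c2 p hp e e0.
  have L0 : 0 <= c - b by case/andP: hbc => _ bc; rewrite subr_ge0.
  move: L0; set L := c - b => L0.
  have L1 : 0 < L + 1 by lra.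
  have e'0 : 0 < e / (L + 1) by rewrite divr_gt0.
  have [eta [eta0 he]] := hR p hp _ e'0.
  have eL0 : 0 < eta / (L + 1) by rewrite divr_gt0.
  have [N hNN] := small_inv eL0.
  exists N => P hP; rewrite (snBC _ _ (hGt hp)).
  have hq := hNN P hP; move: hq; set q := P.+1%:R^-1 => hq.
  have q0 : 0 <= q by rewrite /q invr_ge0 ler0n.
  rewrite ltr_pdivlMr // in hq.
  have hP' : L / P.+1%:R < eta by rewrite -/q; lra.
  apply: le_lt_trans (he b c P.+1 hbc c2 (ltn0Sn P) hP') _.
  have ce : e / (L + 1) * (L + 1) = e by rewrite divfK // gt_eqF.
  move: ce e'0; set k := e / (L + 1) => ce k0; rewrite -/L; lra.
have shift : forall a h, 0 <= a -> 0 <= h -> a + h <= 2 -> T h (F a) = F (a + h) - F h.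
  move=> a h a0 h0 ah2.
  have a2 : a <= 2 by lra.
  have hu := RSc 0 a (andP_intro (lexx 0) a0) a2; rewrite F0 subr0 in hu.
  have hv := RSc h (a + h) (andP_intro h0 (ler_wpDl a0 (lexx h))) ah2.
  have hb : forall P, `|RS T x P.+1 0 a| <= (a - 0) * (C * `|x|).
    by move=> P; apply: RSn => //; rewrite lexx.
  have hTu : sconv Gt (fun P => T h (RS T x P.+1 0 a)) (T h (F a)).
    move=> p hp e e0; have [N hN'] := Tbi hS hT hb hu h0 hp e0.
    exists N => n hn; have := hN' n hn h (andP_intro h0 (lexx h)).
    by rewrite (linearB (T h)).
  have E : forall P, T h (RS T x P 0 a) = RS T x P h (a + h).
    move=> P; rewrite /RS linear_sum; apply: eq_bigr => i _.
    rewrite subr0 add0r addrK (TZ (T h)) -(TD hT x h0) //.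
    by rewrite mulr_ge0 // divr_ge0.
  apply: (sconv_uniq hS hTu) => p hp e e0.
  have [N hN'] := hv p hp e e0; exists N => n hn; rewrite E; exact: hN'.
have genF : forall a, 0 < a <= 1 -> gen_rel Gt T (F a) (T a x - x).
  move=> a /andP[a0 a1]; split.
  - apply/(hconvP _ _ hGt) => p hp e e0.
    have e40 : 0 < e / 4 by rewrite divr_gt0.
    have [eta [eta0 he]] := hL p hp _ e40.
    exists (Num.min eta 1); split; first by rewrite lt_min eta0 ltr01.
    move=> h /andP[h0]; rewrite lt_min => /andP[heta h1].
    rewrite (shift a h (ltW a0) (ltW h0)); last by lra.
    rewrite id_gen ?gt_eqF //.
    have hp' := hGt hp.
    have E1 : a + h - a = h by rewrite addrAC subrr add0r.
    have w1 := he a (a + h) (andP_intro (ltW a0) (ler_wpDr (ltW h0) (lexx a))).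
    rewrite E1 in w1; have {}w1 := w1 (ltac:(lra)) heta.
    have w2 := he 0 h (andP_intro (lexx 0) (ltW h0)).
    rewrite F0 (T0 hT) !subr0 in w2; have {}w2 := w2 (ltac:(lra)) heta.
    apply: le_lt_trans (snD _ _ hp') _; rewrite (snN _ hp') !(snZ _ _ hp').
    rewrite ger0_norm ?invr_ge0 ?(ltW h0) //.
    have k1 : h^-1 * (h * (e / 4)) = e / 4 by rewrite mulKf // gt_eqF.
    have i0 : 0 <= h^-1 by rewrite invr_ge0 ltW.
    have := ler_wpM2l i0 w1; have := ler_wpM2l i0 w2; rewrite k1; lra.
  - exists (2 * B) => h /andP[h0 h1].
    rewrite (shift a h (ltW a0) (ltW h0)); last by lra.
    rewrite ler_pdivrMr //.
    have n1 := hN a (a + h) (andP_intro (ltW a0) (ler_wpDr (ltW h0) (lexx a))).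
    have E1 : a + h - a = h by rewrite addrAC subrr add0r.
    rewrite E1 in n1; have {}n1 := n1 (ltac:(lra)).
    have n2 := hN 0 h (andP_intro (lexx 0) (ltW h0)).
    rewrite F0 !subr0 in n2; have {}n2 := n2 (ltac:(lra)).
    rewrite id_sh subr0; have := ler_normB (F (a + h) - F a) (F h); lra.
have h12 : (1 : R) <= 2 by lra.
exists (fun n => n.+1%:R *: F (dl n)); split; [|split].
- move=> n; apply/(hGen.1); exists (n.+1%:R *: (T (dl n) x - x)).
  by apply: (gen_relZ hS n.+1%:R); apply: genF; rewrite dl_gt0 /=; exact: inv_le1.
- exists B => n; rewrite normrZ ger0_norm ?ler0n //.
  have := hN 0 (dl n) (andP_intro (lexx 0) (ltW (dl_gt0 n))).
  rewrite F0 !subr0 => /(_ (le_trans (inv_le1 n) h12)) h.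
  apply: le_trans (ler_wpM2l (ler0n _ _) h) _.
  by rewrite mulrA /dl mulfV ?mul1r // pnatr_eq0.
- move=> p hp e e0; have e20 : 0 < e / 2 by rewrite divr_gt0.
  have [eta [eta0 he]] := hL p hp _ e20.
  have [N hN'] := small_inv eta0.
  exists N => n hn.
  rewrite (id_sc (a := dl n)); last by rewrite /dl mulfV // pnatr_eq0.
  rewrite (snZ _ _ (hGt hp)) ger0_norm ?ler0n //.
  have := he 0 (dl n) (andP_intro (lexx 0) (ltW (dl_gt0 n))).
  rewrite F0 (T0 hT) !subr0 => /(_ (le_trans (inv_le1 n) h12) (hN' n hn)) h.
  apply: le_lt_trans (ler_wpM2l (ler0n _ _) h) _.
  by rewrite mulrA /dl mulfV ?mul1r ?pnatr_eq0 // ltr_pdivrMr //; lra.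
Qed.

End Dense.

Lemma id_w {V : zmodType} (a b c : V) : a + (b - a - c) = b - c.
Proof. by rewrite addrA [a + _]addrC subrK. Qed.

Section Mono.
Context {R : realType} {X : normedModType R}.
Variable (Gt : set (X -> R)) (T : R -> {linear X -> X}) (D : set X) (A : X -> X).
Hypothesis hS : saks_space Gt.
Hypothesis hT : bicont_semigroup Gt T.
Hypothesis hGen : is_generator Gt T D A.

Let hGt := hGt hS.

Lemma monoD G p x t : generates G (mixed_open Gt) -> dissipative G D A -> G p -> D x -> 0 <= t ->
  p (T t x) <= p x.
Proof.
move=> hG hdis hp Dx t0.
have hp' : seminorm p by case: hG => hGs _; exact: hGs.
move: (t0); rewrite le_eqVlt => /orP[/eqP <-|tpos]; first by rewrite (T0 hT).
apply/ler_addgt0Pr => e e0.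
have tn0 : t != 0 by rewrite gt_eqF.
pose eps := e / t.
have eps0 : 0 < eps by rewrite divr_gt0.
suff : p (T t x) <= p x + t * eps by rewrite /eps mulrC divfK.
have hx := hGen.2 x Dx; have hc := gen_rel_hconv hS hx; case: hx => _ [c0 hc0].
have [Ct [Ct0 hCt]] := Tbound hT t.
pose hN N := t * dl N.
have hN0 : forall N, 0 < hN N by move=> N; rewrite mulr_gt0 // dl_gt0.
have hNt : forall N, hN N <= t.
  move=> N; rewrite /hN -[X in _ <= X]mulr1; apply: ler_wpM2l; [exact: ltW|rewrite /dl; exact: inv_le1].
pose w N := (hN N)^-1 *: (T (hN N) x - x) - T (hN N) (A x).
pose rw := `|c0| + (Ct + 1) * `|x| + Ct * `|A x|.
have hwb : forall N, `|w N| <= rw.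
  move=> N; apply: le_trans (ler_normB _ _) _; apply: lerD; last first.
    by apply: hCt; rewrite (ltW (hN0 N)) hNt.
  rewrite normrZ ger0_norm ?invr_ge0 ?(ltW (hN0 N)) //.
  have hx0 : 0 <= (Ct + 1) * `|x| by rewrite mulr_ge0 // addr_ge0.
  have hc1 := ler_norm c0.
  have [h1|h1] := leP (hN N) 1.
    have := hc0 (hN N) (andP_intro (hN0 N) h1); rewrite mulrC; lra.
  have hT1 : `|T (hN N) x - x| <= (Ct + 1) * `|x|.
    apply: le_trans (ler_normB _ _) _; rewrite mulrDl mul1r lerD2r.
    by apply: hCt; rewrite (ltW (hN0 N)) hNt.
  have hi : (hN N)^-1 <= 1 by rewrite invr_le1 // ?unitfE ?gt_eqF ?hN0 // ltW.
  have := ler_wpM2r (normr_ge0 (T (hN N) x - x)) hi; rewrite mul1r; have := normr_ge0 c0; lra.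
have hw : sconv Gt w 0.
  move=> q hq e' e'0; have e20 : 0 < e' / 2 by rewrite divr_gt0.
  have [d1 [d10 hd1]] := hc q hq _ e20.
  have [d2 [d20 hd2]] := Tcont0 hS hT (A x) hq e20.
  have dm0 : 0 < Num.min d1 d2 by rewrite lt_min d10 d20.
  have [N0 hN0'] := small_inv (divr_gt0 dm0 tpos).
  exists N0 => n hn; rewrite subr0.
  have hs : hN n < Num.min d1 d2.
    by rewrite /hN mulrC -ltr_pdivlMr // ; apply: hN0'.
  move: hs; rewrite lt_min => /andP[s1 s2].
  have -> : w n = ((hN n)^-1 *: (T (hN n) x - x) - A x) + (A x - T (hN n) (A x)).
    by rewrite addrA subrK.
  have hq' : seminorm q by exact: hGt hq.
  apply: le_lt_trans (snD _ _ hq') _.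
  have := hd1 (hN n) (andP_intro (hN0 n) s1).
  have := hd2 (hN n) (ltW (hN0 n)) s2; rewrite (snBC _ _ hq'); lra.
have [n [ps [hps [e' [e'0 hb]]]]] := G_local (Ct * rw) hG hp eps0.
have : forall i, exists N, forall m, (N <= m)%N ->
    forall r, 0 <= r <= t -> ps i (T r (w m - 0)) < e'.
  move=> i; have := Tbi hS hT hwb hw t0 (hps i) e'0; exact.
move=> /fin_max_nat [N1 hN1].
have hsmall : forall r, 0 <= r <= t -> p (T r (w N1)) < eps.
  move=> r hr; apply: hb.
    apply: le_trans (hCt r _ hr) _; apply: ler_wpM2l => //; exact: hwb.
  by move=> i; have := hN1 N1 (leqnn N1) i r hr; rewrite subr0.
pose h := hN N1.
have h0 : 0 < h := hN0 N1.
have hKh : N1.+1%:R * h = t by rewrite /h /hN /dl mulrCA mulfV ?mulr1 // pnatr_eq0.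
suff hind : forall k, (k <= N1.+1)%N -> p (T (k%:R * h) x) <= p x + k%:R * h * eps.
  by have := hind N1.+1 (leqnn _); rewrite hKh.
elim=> [|k IH] hk.
  by rewrite !mul0r (T0 hT) addr0.
have {}IH := IH (ltnW hk).
move: IH; set s := k%:R * h => IH.
have s0 : 0 <= s by rewrite /s mulr_ge0 // ltW.
have E : k.+1%:R * h = s + h by rewrite -[k.+1%:R]/(1 *+ k.+1) mulrSr mulrDl mul1r.
have sht : s + h <= t.
  by rewrite -E -hKh; apply: ler_wpM2r; [exact: ltW | rewrite ler_nat].
have st : s <= t by lra.
rewrite E.
have [Dy AyE] := D_T hS hT hGen Dx (addr_ge0 s0 (ltW h0)).
have hd := hdis p hp (h^-1) (T (s + h) x) (eq_ind_r is_true h0 (invr_gt0 h)) Dy.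
rewrite AyE in hd.
have Eid : h^-1 *: T (s + h) x - T (s + h) (A x) = h^-1 *: T s x + T s (w N1).
  rewrite /w -/h (TD hT x s0 (ltW h0)) (TD hT (A x) s0 (ltW h0)).
  by rewrite (linearB (T s)) (TZ (T s)) (linearB (T s)) scalerBr id_w.
rewrite Eid in hd.
have H1 : h^-1 * p (T (s + h) x) <= h^-1 * p (T s x) + eps.
  apply: le_trans hd _; apply: le_trans (snD (h^-1 *: T s x) (T s (w N1)) hp') _.
  rewrite (snZ _ _ hp') ger0_norm ?invr_ge0 ?(ltW h0) // lerD2l.
  by apply: ltW; apply: hsmall; rewrite s0 st.
have := ler_wpM2l (ltW h0) H1; rewrite mulrDr !mulrA mulfV ?gt_eqF // !mul1r.
move: IH; rewrite /eps; lra.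
Qed.

End Mono.

Definition qf {R : realType} {X : normedModType R} (T : R -> {linear X -> X}) (p : X -> R) (y : X) : R :=
  sup [set r : R | exists t, 0 <= t /\ r = p (T t y)].

Section SupNorm.
Context {R : realType} {X : normedModType R}.
Variable (Gt : set (X -> R)) (T : R -> {linear X -> X}).
Hypothesis hT : bicont_semigroup Gt T.
Variables (p pt : X -> R) (C : R).
Hypothesis hp : seminorm p.
Hypothesis hpt : seminorm pt.
Hypothesis C0 : 0 <= C.
Hypothesis hb : forall t y, 0 <= t -> p (T t y) <= C * pt y.

Let qS y := [set r : R | exists t, 0 <= t /\ r = p (T t y)].

Lemma qS_ne y : qS y !=set0.
Proof. by exists (p (T 0 y)); exists 0; split. Qed.

Lemma q_bnd y M : (forall t, 0 <= t -> p (T t y) <= M) -> qf T p y <= M.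
Proof. by move=> h; apply: ge_sup (qS_ne y) _ => r [t [t0 ->]]; apply: h. Qed.

Lemma q_ub y t : 0 <= t -> p (T t y) <= qf T p y.
Proof.
move=> t0; have hs : has_sup (qS y).
  split; first exact: qS_ne.
  by exists (C * pt y) => r [s [s0 ->]]; apply: hb.
by apply: (sup_upper_bound hs); exists t.
Qed.

Lemma q_le y : qf T p y <= C * pt y.
Proof. by apply: q_bnd => t t0; apply: hb. Qed.

Lemma q_ge y : p y <= qf T p y.
Proof. by have := q_ub y (lexx 0); rewrite (T0 hT). Qed.

Lemma q_T y h : 0 <= h -> qf T p (T h y) <= qf T p y.
Proof. by move=> h0; apply: q_bnd => t t0; rewrite -(TD hT y t0 h0); apply: q_ub; rewrite addr_ge0. Qed.

Lemma q_ge0 y : 0 <= qf T p y.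
Proof. exact: le_trans (sn_ge0 y hp) (q_ge y). Qed.

Lemma q_Zle a y : qf T p (a *: y) <= `|a| * qf T p y.
Proof.
apply: q_bnd => t t0; rewrite (TZ (T t)) (snZ _ _ hp).
by apply: ler_wpM2l => //; apply: q_ub.
Qed.

Lemma q_sn : seminorm (qf T p).
Proof.
split.
- move=> y z; apply: q_bnd => t t0; rewrite (linearD (T t)).
  apply: le_trans (snD _ _ hp) _; apply: lerD; exact: q_ub.
- move=> a y; apply/eqP; rewrite eq_le q_Zle /=.
  have [->|a0] := eqVneq a 0; first by rewrite normr0 mul0r q_ge0.
  have := q_Zle a^-1 (a *: y); rewrite scalerA mulVf // scale1r => h.
  have na : 0 < `|a| by rewrite normr_gt0.
  have := ler_wpM2l (ltW na) h; rewrite mulrA normrV ?unitfE // mulfV ?mul1r //.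
  by rewrite gt_eqF.
Qed.

End SupNorm.

Section AB.
Context {R : realType} {X : normedModType R}.
Variable (Gt : set (X -> R)) (T : R -> {linear X -> X}) (D : set X) (A : X -> X).
Hypothesis hS : saks_space Gt.
Hypothesis hT : bicont_semigroup Gt T.
Hypothesis hGen : is_generator Gt T D A.

Let hGt := hGt hS.

Lemma b_to_a (hC : complete_saks Gt) :
  (exists G, generates G (mixed_open Gt) /\ dissipative G D A) -> gamma_equicontinuous Gt T.
Proof.
move=> [G [hG hdis]]; exists G; split => // p hp.
have hp' : seminorm p by case: hG => hGs _; exact: hGs.
exists p; split => //; exists 1; split => // t x t0; rewrite mul1r.
have [y [Dy [[r hr] hy]]] := denseD hS hT hC hGen x.
have [Ct [Ct0 hCt]] := Tbound hT t.
have hyG := bdd_sconv hG hr hy.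
have hTy : sconv Gt (fun n => T t (y n)) (T t x).
  move=> q hq e e0; have [N hN] := Tbi hS hT hr hy t0 hq e0.
  exists N => n hn; have := hN n hn t (andP_intro t0 (lexx t)).
  by rewrite (linearB (T t)).
have hTyb : forall n, `|T t (y n)| <= Ct * r.
  by move=> n; apply: le_trans (hCt t _ (andP_intro t0 (lexx t))) _; apply: ler_wpM2l.
have hTyG := bdd_sconv hG hTyb hTy.
apply/ler_addgt0Pr => e e0; have e20 : 0 < e / 2 by rewrite divr_gt0.
have [N1 h1] := hyG p hp _ e20; have [N2 h2] := hTyG p hp _ e20.
pose n := maxn N1 N2.
have a1 := h1 n (leq_maxl _ _); have a2 := h2 n (leq_maxr _ _).
have m := monoD hS hT hGen hG hdis hp (Dy n) t0.
have l1 := sn_lip (T t x) (T t (y n)) hp'.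
have l2 := sn_lip (y n) x hp'.
rewrite (snBC (T t x) _ hp') in l1.
lra.
Qed.

Lemma a_to_b : gamma_equicontinuous Gt T ->
  exists G', generates G' (mixed_open Gt) /\ dissipative G' D A.
Proof.
move=> [G [hG heq]]; have [hGs [hGd hGo]] := hG.
have hq : forall p, G p -> exists pt C, G pt /\ 0 <= C /\
    forall t y, 0 <= t -> p (T t y) <= C * pt y.
  by move=> p hp; have [pt [hpt [C [C0 hC]]]] := heq p hp; exists pt, C.
have qsn : forall p, G p -> seminorm (qf T p).
  by move=> p hp; have [pt [C [hpt [C0 hC]]]] := hq p hp; have := @q_sn R X Gt T hT p pt C (hGs p hp) hC; exact.
have qub : forall p, G p -> forall y t, 0 <= t -> p (T t y) <= qf T p y.
  by move=> p hp y t t0; have [pt [C [hpt [C0 hC]]]] := hq p hp; exact: (@q_ub R X T p pt C hC y t t0).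
have qle : forall p, G p -> exists pt C, G pt /\ 0 <= C /\ forall y, qf T p y <= C * pt y.
  move=> p hp; have [pt [C [hpt [C0 hC]]]] := hq p hp; exists pt, C; split => //; split => //.
  exact: (@q_le R X T p pt C hC).
have qge : forall p, G p -> forall y, p y <= qf T p y.
  by move=> p hp y; have [pt [C [hpt [C0 hC]]]] := hq p hp; exact: (@q_ge R X Gt T hT p pt C hC y).
have qT : forall p, G p -> forall y h, 0 <= h -> qf T p (T h y) <= qf T p y.
  by move=> p hp y h h0; have [pt [C [hpt [C0 hC]]]] := hq p hp; exact: (@q_T R X Gt T hT p pt C hC y h h0).
exists [set q | exists p, G p /\ q = qf T p]; split; [split; [|split]|].
- by move=> q [p [hp ->]]; exact: qsn.
- move=> q1 q2 [p1 [hp1 ->]] [p2 [hp2 ->]].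
  have [p [hp [C [C0 hC]]]] := hGd p1 p2 hp1 hp2.
  exists (qf T p); split; first by exists p.
  exists C; split => // z; rewrite ge_max; apply/andP; split; apply: q_bnd => t t0.
  + apply: le_trans (_ : Num.max (p1 (T t z)) (p2 (T t z)) <= _).
      by rewrite le_max lexx.
    by apply: le_trans (hC _) _; apply: ler_wpM2l => //; exact: qub.
  + apply: le_trans (_ : Num.max (p1 (T t z)) (p2 (T t z)) <= _).
      by rewrite le_max lexx orbT.
    by apply: le_trans (hC _) _; apply: ler_wpM2l => //; exact: qub.
- move=> U; rewrite hGo; split.
  + move=> hU x0 Ux; have [n [ps [hps [eps [eps0 hbU]]]]] := hU x0 Ux.
    exists n, (fun i => qf T (ps i)); split; first by move=> i; exists (ps i).
    exists eps; split => // y hy; apply: hbU => i.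
    exact: le_lt_trans (qge _ (hps i) _) (hy i).
  + move=> hU x0 Ux; have [n [qs [hqs [eps [eps0 hbU]]]]] := hU x0 Ux.
    have : forall i, exists pC : ((X -> R) * R)%type, G pC.1 /\ 0 <= pC.2 /\
        forall y, qs i y <= pC.2 * pC.1 y.
      move=> i; have [p [hp ->]] := hqs i; have [pt [C [hpt [C0 hC]]]] := qle p hp.
      by exists (pt, C).
    move=> /choice [f hf].
    have hpos : forall i, 0 < eps / ((f i).2 + 1).
      by move=> i; have [_ [C0 _]] := hf i; rewrite divr_gt0 // ltr_wpDl.
    have [e' [e'0 he']] := fin_pos_min hpos.
    exists n, (fun i => (f i).1); split; first by move=> i; case: (hf i).
    exists e'; split => // y hy; apply: hbU => i.
    have [hG1 [C0 hC]] := hf i.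
    apply: le_lt_trans (hC _) _.
    have := lt_le_trans (hy i) (he' i).
    move: C0; set C := (f i).2; set a := (f i).1 (y - x0) => C0 ha.
    have C1 : 0 < C + 1 by lra.
    have ce : eps / (C + 1) * (C + 1) = eps by rewrite divfK // gt_eqF.
    have a0 : 0 <= a by apply: sn_ge0 (hGs _ hG1).
    move: ce ha; set k := eps / (C + 1) => ce ha.
    have : C * a <= C * k by apply: ler_wpM2l => //; exact: ltW.
    have k0 : 0 < k by lra.
    nra.
- move=> q [p [hp ->]] lam y lam0 Dy.
  have [pt [C [hpt [C0 hC]]]] := qle p hp.
  have hx := hGen.2 y Dy; have hc := gen_rel_hconv hS hx; case: hx => _ [c0 hc0].
  have hq' := qsn p hp.
  apply/ler_addgt0Pr => e e0.
  have C1 : 0 < C + 1 by lra.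
  pose ee := e / (C + 1).
  have ee0 : 0 < ee by rewrite divr_gt0.
  have [n [ps [hps [e' [e'0 hbl]]]]] := G_local (c0 + `|A y|) hG hpt ee0.
  have : forall i, exists d, 0 < d /\ forall h, 0 < h < d ->
      ps i (h^-1 *: (T h y - y) - A y) < e' by move=> i; exact: hc (ps i) (hps i) e' e'0.
  move=> /fin_min_pos [d [d0 hd]].
  pose h := Num.min d 1 / 2.
  have hm0 : 0 < Num.min d 1 by rewrite lt_min d0 ltr01.
  have hm1 : Num.min d 1 <= d by rewrite ge_min lexx.
  have hm2 : Num.min d 1 <= 1 by rewrite ge_min lexx orbT.
  have h0 : 0 < h by rewrite divr_gt0.
  have hd' : h < d by rewrite /h; lra.
  have h1 : h <= 1 by rewrite /h; lra.
  pose v := h^-1 *: (T h y - y).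
  have hv : pt (v - A y) < ee.
    apply: hbl; last by move=> i; apply: hd; rewrite h0 hd'.
    have hi : 0 <= h^-1 by rewrite invr_ge0 ltW.
    apply: le_trans (ler_normB _ _) _; rewrite lerD2r /v normrZ (ger0_norm hi).
    by rewrite mulrC; apply: hc0; rewrite h0 h1.
  have c1 : lam * qf T p y <= qf T p (lam *: y - v).
    have E : (lam + h^-1) *: y = (lam *: y - v) + h^-1 *: T h y.
      by rewrite /v scalerDl scalerBr opprB -addrA subrK.
    have hi : 0 <= h^-1 by rewrite invr_ge0 ltW.
    have hli : 0 <= lam + h^-1 by rewrite addr_ge0 // ltW.
    have := snD (lam *: y - v) (h^-1 *: T h y) hq'; rewrite -E !(snZ _ _ hq').
    rewrite (ger0_norm hi) (ger0_norm hli).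
    have := qT p hp y h (ltW h0).
    move=> hTq; have := ler_wpM2l hi hTq; lra.
  have c2 : qf T p (lam *: y - v) <= qf T p (lam *: y - A y) + qf T p (A y - v).
    have := sn_lip (lam *: y - v) (lam *: y - A y) hq'.
    by rewrite opprB [(lam *: y - v) + _]addrC addrA subrK.
  have c3 : qf T p (A y - v) <= C * ee.
    apply: le_trans (hC _) _; apply: ler_wpM2l => //.
    rewrite (snBC _ _ (hGs _ hpt)); exact: ltW.
  have c4 : C * ee <= e.
    have ce : ee * (C + 1) = e by rewrite /ee divfK // gt_eqF.
    move: ce ee0; set k := ee => ce k0; nra.
  lra.
Qed.

End AB.


Theorem proposition3p23 (R : realType) (X : completeNormedModType R)
  (Gt : set (X -> R)) (T : R -> {linear X -> X}) (D : set X) (A : X -> X) :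
  saks_space Gt -> complete_saks Gt -> C_sequential Gt ->
  bicont_semigroup Gt T -> is_generator Gt T D A ->
  (gamma_equicontinuous Gt T <->
   exists G : set (X -> R), generates G (mixed_open Gt) /\ dissipative G D A).
Proof.
move=> hS hC _ hT hGen; split.
- exact: a_to_b hS hT hGen.
- exact: b_to_a hS hT hGen hC.
Qed.
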